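(* Let $q\in\mathbb{C}$ with $|q|<1$ and let $\mathbf{s}=(s_1,\dots,s_d)\in\mathbb{Z}^d$. Then: (i) $\zeta_q^{\mathrm{I}}[\mathbf{s}]$ converges if $s_1+\dots+s_j>j$ for all $j=1,\dots,d$; (ii) $\zeta_q^{\mathrm{II}}[\mathbf{s}]$ converges if $s_1+\dots+s_j>0$ for all $j=1,\dots,d$; (iii) $\zeta_q^{\mathrm{III}}[\mathbf{s}]$ always converges; (iv) $\zeta_q^{\mathrm{IV}}[\mathbf{s}]$ converges if $s_1+\dots+s_j>1$ for all $j=1,\dots,d$.
   Context: For integer tuples $\mathbf{t}=(t_1,\dots,t_d)$, $\mathbf{s}=(s_1,\dots,s_d)$ and $|q|<1$ define $$\zeta_q^{\mathbf{t}}[\mathbf{s}]=(1-q)^{s_1+\dots+s_d}\sum_{k_1>\dots>k_d>0}\frac{q^{k_1t_1+\dots+k_dt_d}}{(1-q^{k_1})^{s_1}\cdots(1-q^{k_d})^{s_d}}.$$ Then $\zeta_q^{\mathrm{I}}[\mathbf{s}]:=\zeta_q^{(s_1-1,\dots,s_d-1)}[\mathbf{s}]$, $\zeta_q^{\mathrm{II}}[\mathbf{s}]:=\zeta_q^{(s_1,\dots,s_d)}[\mathbf{s}]$, $\zeta_q^{\mathrm{III}}[\mathbf{s}]:=\zeta_q^{(1,0,\dots,0)}[\mathbf{s}]$, $\zeta_q^{\mathrm{IV}}[\mathbf{s}]:=\zeta_q^{(s_1-1,s_2,\dots,s_d)}[\mathbf{s}]$. *)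

(* Defs.v *)
From mathcomp Require Import all_boot all_order all_algebra.
From mathcomp Require Import all_classical all_reals all_analysis.
From mathcomp Require Import complex.
Set Implicit Arguments. Unset Strict Implicit. Unset Printing Implicit Defensive.
Import Order.TTheory GRing.Theory Num.Theory.
Local Open Scope ring_scope.
Local Open Scope classical_set_scope.

Definition qmzv_index (d : nat) : set (seq nat) :=
  [set k | size k = d /\ sorted gtn k /\ all (fun x => 0 < x)%N k].

Definition qmzv_term (R : realType) (t s : seq int) (q : R[i]) (k : seq nat) : R[i] :=
  (1 - q) ^ (\sum_(i < size s) s`_i)
  * \prod_(i < size s)
      (q ^ ((nth 0%N k i)%:Z * t`_i) / (1 - q ^+ (nth 0%N k i)) ^ s`_i).

(* Convergence of zeta_q^t[s] (absolute convergence of the multiple series). *)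
Definition qmzv_converges (R : realType) (t s : seq int) (q : R[i]) : Prop :=
  summable (qmzv_index (size s))
    (fun k => (ComplexField.Normc.normc (qmzv_term t s q k))%:E).

Definition tI (s : seq int) : seq int := [seq x - 1 | x <- s].
Definition tII (s : seq int) : seq int := s.
Definition tIII (s : seq int) : seq int :=
  if s is _ :: s' then 1 :: [seq 0 | _ <- s'] else [::].
Definition tIV (s : seq int) : seq int :=
  if s is x :: s' then (x - 1) :: s' else [::].

Definition zetaI_converges (R : realType) (s : seq int) (q : R[i]) :=
  qmzv_converges (tI s) s q.
Definition zetaII_converges (R : realType) (s : seq int) (q : R[i]) :=
  qmzv_converges (tII s) s q.
Definition zetaIII_converges (R : realType) (s : seq int) (q : R[i]) :=
  qmzv_converges (tIII s) s q.
Definition zetaIV_converges (R : realType) (s : seq int) (q : R[i]) :=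
  qmzv_converges (tIV s) s q.

Definition cmod (R : realType) (z : R[i]) : R := ComplexField.Normc.normc z.

(* Main.v *)
Require Import Defs.
From mathcomp Require Import all_boot all_order all_algebra.
From mathcomp Require Import all_classical all_reals all_analysis.
From mathcomp Require Import complex.
From mathcomp Require Import zify ring lra.
Import Order.TTheory GRing.Theory Num.Theory.
Local Open Scope ring_scope.
Import ComplexField.Normc.

Lemma normc_ge0 {R : realType} (x : R[i]) : 0 <= normc x.
Proof. by case: x => a b; rewrite /normc sqrtr_ge0. Qed.

Lemma normcXn {R : realType} (x : R[i]) n : normc (x ^+ n) = normc x ^+ n.
Proof.
elim: n => [|n IH]; first by rewrite !expr0 normc1.
by rewrite !exprS normcM IH.
Qed.

Lemma normcXz {R : realType} (x : R[i]) (z : int) : normc (x ^ z) = normc x ^ z.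
Proof. by case: z => n /=; rewrite ?normcV normcXn. Qed.

Lemma normc_prod {R : realType} n (F : 'I_n -> R[i]) :
  normc (\prod_(i < n) F i) = \prod_(i < n) normc (F i).
Proof. by apply: (big_morph _ (@normcM R) (@normc1 R)). Qed.

Lemma normc_sub {R : realType} (x y : R[i]) : normc x - normc y <= normc (x - y).
Proof.
have := le_normcD (x - y) y; rewrite subrK; lra.
Qed.

Lemma normc_add {R : realType} (x y : R[i]) : normc (x - y) <= normc x + normc y.
Proof. by have := le_normcD x (- y); rewrite normcN. Qed.

Lemma exprzM_le {R : realType} (r : R) (a b : int) : 0 <= r ->
  r ^ a * r ^ b <= r ^ (a + b).
Proof.
move=> r0; have [->|rn0] := eqVneq r 0.
  rewrite !exp0rz; have [->|an0] := eqVneq a 0; first by rewrite add0r mul1r.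
  by rewrite mul0r ler0n.
by rewrite exprzDr ?unitfE.
Qed.

Lemma prod_exprz_le {R : realType} (r : R) n (z : 'I_n -> int) : 0 <= r ->
  \prod_(i < n) r ^ z i <= r ^ (\sum_(i < n) z i).
Proof.
move=> r0; elim: n z => [|n IH] z; first by rewrite !big_ord0.
rewrite !big_ord_recr /=; apply: (le_trans _ (exprzM_le r _ _ r0)).
by rewrite ler_wpM2r ?exprz_ge0 ?IH.
Qed.

Lemma exprz_le_nat {R : realType} (r : R) (m : nat) (e : int) : 0 <= r -> r < 1 ->
  (m%:Z <= e) -> r ^ e <= r ^+ m.
Proof.
move=> r0 r1 me; have [->|rn0] := eqVneq r 0.
  rewrite exp0rz; case: m me => [|m] me; first by rewrite expr0; case: (e == 0); rewrite ?ler01 ?lexx.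
  have -> : (e == 0) = false by apply/negbTE; lia.
  by rewrite expr0n.
have rp : 0 < r by rewrite lt_neqAle eq_sym rn0.
rewrite exprnP ler_piXz2l // -?topredE /=; lia.
Qed.

Lemma abel (k : seq nat) (t : seq int) (T0 : int) : sorted geq k ->
  (forall j, (1 <= j <= size k)%N -> 1 <= T0 + \sum_(i < j) t`_i) ->
  (head 0%N k)%:Z <= \sum_(i < size k) (nth 0%N k i)%:Z * t`_i + (head 0%N k)%:Z * T0.
Proof.
elim: k t T0 => [|a k IH] t T0 /= srt H; first by rewrite big_ord0; lia.
have srtk : sorted geq k := path_sorted srt.
have ha : (head 0%N k <= a)%N by case: k srt {IH H srtk} => //= b k /andP[].
have H1 : 1 <= T0 + t`_0 by have := H 1%N isT; rewrite big_ord1.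
have := IH (behead t) (T0 + t`_0) srtk.
have Hk : forall j, (1 <= j <= size k)%N -> 1 <= T0 + t`_0 + \sum_(i < j) (behead t)`_i.
  move=> j /andP[j1 jk]; have := H j.+1; rewrite big_ord_recl /= -addrA.
  under eq_bigr => i _ do rewrite /bump /= add1n -nth_behead.
  by apply; rewrite ltnS jk.
move/(_ Hk) => IHk.
rewrite big_ord_recl /=.
under eq_bigr => i _ do rewrite /bump /= add1n -nth_behead.
set S := \sum_(i < size k) _ in IHk *.
have hpos : 0 <= ((a:int) - (head 0%N k : int)) * (T0 + t`_0 - 1).
  by apply: mulr_ge0; [rewrite subr_ge0 lez_nat | rewrite subr_ge0].
nra.
Qed.

Lemma bernoulli_le {R : realType} (e : R) n : 0 <= e -> e <= 1 ->
  1 - n%:R * e <= (1 - e) ^+ n.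
Proof.
move=> e0 e1; elim: n => [|n IH]; first by rewrite mul0r subr0 expr0.
rewrite exprSr; have h : (1 - n%:R * e) * (1 - e) <= (1 - e) ^+ n * (1 - e).
  by rewrite ler_wpM2r // subr_ge0.
apply: le_trans h; rewrite -natr1.
have : 0 <= n%:R * e * e :> R by rewrite mulr_ge0 // mulr_ge0.
lra.
Qed.

Lemma geom_le {R : realType} (p : R) n : 0 <= p -> p < 1 ->
  \sum_(j < n) p ^+ j <= (1 - p)^-1.
Proof.
move=> p0 p1.
have e : (1 - p) * \sum_(j < n) p ^+ j = 1 - p ^+ n.
  elim: n => [|n IH]; first by rewrite big_ord0 expr0 mulr0 subrr.
  by rewrite big_ord_recr /= mulrDr IH exprSr; ring.
have pp : 0 < 1 - p by lra.
rewrite -(ler_pM2l pp) mulrV ?unitfE ?gt_eqF // e.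
have := exprn_ge0 n p0; lra.
Qed.

Lemma finite_sum_le {R : realType} (p : R) (d : nat) (L : seq (seq nat)) :
  0 <= p -> p < 1 -> uniq L -> (forall x, x \in L -> size x = d) ->
  \sum_(x <- L) \prod_(i < d) p ^+ (nth 0%N x i) <= ((1 - p)^-1) ^+ d.
Proof.
move=> p0 p1 uL sL.
set N := \max_(x <- L) \max_(i < d) nth 0%N x i.
have hN : forall x, x \in L -> forall i, (i < d)%N -> (nth 0%N x i <= N)%N.
  move=> x xL i id; rewrite /N (big_rem x xL) /=.
  apply: leq_trans (leq_maxl _ _).
  by rewrite (bigD1 (Ordinal id)) //= leq_maxl.
pose g (x : seq nat) : {ffun 'I_d -> 'I_N.+1} := [ffun i : 'I_d => (inord (nth 0%N x i) : 'I_N.+1)].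
pose Q (f : {ffun 'I_d -> 'I_N.+1}) := \prod_(i < d) p ^+ (f i).
have e1 : \sum_(x <- L) \prod_(i < d) p ^+ (nth 0%N x i) = \sum_(y <- map g L) Q y.
  rewrite big_map; apply: eq_big_seq => x xL; apply: eq_bigr => i _.
  by rewrite /g ffunE inordK // ltnS hN.
have ug : uniq (map g L).
  rewrite map_inj_in_uniq // => x y xL yL /ffunP gxy.
  apply: (@eq_from_nth _ 0%N); first by rewrite (sL x xL) (sL y yL).
  move=> i; rewrite (sL x xL) => id; have := gxy (Ordinal id).
  by rewrite !ffunE => /(congr1 val); rewrite /= !inordK // ltnS hN.
have Q0 : forall f, 0 <= Q f by move=> f; apply: prodr_ge0 => i _; apply: exprn_ge0.
rewrite e1 big_uniq //.
apply: (@le_trans _ _ (\sum_f Q f)).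
  rewrite [X in _ <= X](bigID (fun f => f \in map g L)) /= lerDl.
  by apply: sumr_ge0 => f _.
rewrite /Q -(bigA_distr_bigA (fun (i : 'I_d) (j : 'I_N.+1) => p ^+ j)) /=.
have -> : (1 - p)^-1 ^+ d = \prod_(i < d) (1 - p)^-1 by rewrite prodr_const card_ord.
apply: ler_prod => i _; rewrite geom_le // andbT.
by apply: sumr_ge0 => j _; exact: exprn_ge0.
Qed.

Lemma inv_bound {R : realType} (x K : R) (z : int) : 0 < x -> x <= K -> x^-1 <= K ->
  x ^ z <= K ^+ `|z|%N.
Proof.
move=> x0 xK iK; case: z => n /=.
  by rewrite lerXn2r // ?nnegrE ?(ltW x0) // (le_trans (ltW x0)).
have -> : x ^ Negz n = x^-1 ^+ n.+1 by rewrite exprVn.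
rewrite lerXn2r // ?nnegrE ?invr_ge0 ?(ltW x0) //.
by rewrite (le_trans _ iK) // invr_ge0 ltW.
Qed.

Lemma w_bound {R : realType} (q : R[i]) (k : nat) : normc q < 1 -> (0 < k)%N ->
  1 - normc q <= normc (1 - q ^+ k) <= 2.
Proof.
move=> r1 k0; have r0 := normc_ge0 q.
have hk : normc q ^+ k <= normc q.
  by rewrite -{2}(expr1 (normc q)) ler_wiXn2l // ltW.
have := normc_sub 1 (q ^+ k); have := normc_add 1 (q ^+ k).
rewrite normc1 normcXn => h1 h2; apply/andP; split; lra.
Qed.

Lemma main_conv {R : realType} (q : R[i]) (s t : seq int) : cmod q < 1 -> size t = size s ->
  (forall j, (1 <= j <= size s)%N -> 1 <= \sum_(i < j) t`_i) ->
  qmzv_converges t s q.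
Proof.
rewrite /cmod => r1 st Ht.
have r0 : 0 <= normc q := normc_ge0 q.
pose d := size s.
pose eps := (1 - normc q) / d.+1%:R.
have d0 : 0 < d.+1%:R :> R by rewrite ltr0n.
have rr : 0 < 1 - normc q by lra.
have eps0 : 0 < eps by rewrite divr_gt0.
have deps : d%:R * eps <= 1 - normc q.
  rewrite /eps mulrA ler_pdivrMr // -natr1.
  have : 0 <= d%:R :> R by rewrite ler0n.
  nra.
have eps1 : eps <= 1.
  rewrite /eps ler_pdivrMr // -natr1.
  have : 0 <= d%:R :> R by rewrite ler0n.
  nra.
pose p := 1 - eps.
have p0 : 0 <= p by rewrite /p; lra.
have p1 : p < 1 by rewrite /p; lra.
have hpd : normc q <= p ^+ d.
  have := @bernoulli_le R eps d (ltW eps0) eps1; rewrite -/p; lra.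
pose K := 2 + (1 - normc q)^-1.
have K0 : 0 <= K by rewrite /K addr_ge0 // invr_ge0 ltW.
pose C := normc ((1 - q) ^ (\sum_(i < d) s`_i)) * \prod_(i < d) K ^+ absz s`_i.
have C0 : 0 <= C.
  by rewrite /C mulr_ge0 ?normc_ge0 // prodr_ge0 // => i _; rewrite exprn_ge0.
have key : forall k, qmzv_index d k ->
    normc (qmzv_term t s q k) <= C * \prod_(i < d) p ^+ (nth 0%N k i).
  move=> k [sk [srt pos]].
  have kpos : forall i, (i < d)%N -> (0 < nth 0%N k i)%N.
    by move=> i id; apply: (all_nthP 0%N pos); rewrite sk.
  have srtg : sorted geq k.
    by apply: sub_sorted srt => a b /= /ltnW.
  have kle : forall i, (i < d)%N -> (nth 0%N k i <= nth 0%N k 0)%N.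
    move=> i id.
    have := @sorted_leq_nth _ geq (fun a b c h1 h2 => leq_trans h2 h1) (fun a => leqnn a) 0%N k srtg 0%N i.
    by apply; rewrite ?inE ?sk //= (leq_ltn_trans _ id).
  rewrite /qmzv_term normcM normc_prod -/d.
  rewrite (eq_bigr (fun i : 'I_d => normc q ^ ((nth 0%N k i)%:Z * t`_i) *
      (normc (1 - q ^+ nth 0%N k i) ^ s`_i)^-1)); last first.
    by move=> i _; rewrite normcM normcV !normcXz.
  rewrite big_split /= /C -mulrA ler_wpM2l ?normc_ge0 // [X in _ <= X]mulrC.
  apply: ler_pM.
  - by apply: prodr_ge0 => i _; rewrite exprz_ge0.
  - by apply: prodr_ge0 => i _; rewrite invr_ge0 exprz_ge0 ?normc_ge0.
  - apply: le_trans (prod_exprz_le _ _ _ r0) _.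
    apply: le_trans (@exprz_le_nat R (normc q) (nth 0%N k 0) _ r0 r1 _) _.
      have := @abel k t 0 srtg.
      rewrite mulr0 addr0 sk nth0; apply => j /Ht; rewrite add0r; apply.
    apply: le_trans (lerXn2r _ _ _ hpd) _; rewrite ?nnegrE ?exprn_ge0 //.
    rewrite exprAC.
    have -> : (p ^+ nth 0%N k 0) ^+ d = \prod_(i < d) p ^+ nth 0%N k 0.
      by rewrite prodr_const card_ord.
    apply: ler_prod => i _; rewrite exprn_ge0 //= ler_wiXn2l ?(ltW p1) //.
    exact: kle.
  - apply: ler_prod => i _; rewrite invr_ge0 exprz_ge0 ?normc_ge0 //=.
    rewrite invr_expz -(abszN s`_i).
    have /andP[w1 w2] := w_bound q (nth 0%N k i) r1 (kpos i (ltn_ord i)).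
    have wp : 0 < normc (1 - q ^+ nth 0%N k i) by lra.
    apply: inv_bound => //.
      have : 0 <= (1 - normc q)^-1 by rewrite invr_ge0 ltW.
      rewrite /K; lra.
    have : (normc (1 - q ^+ nth 0%N k i))^-1 <= (1 - normc q)^-1.
      by rewrite lef_pV2 ?posrE.
    rewrite /K; lra.
rewrite /qmzv_converges /summable.
apply: (le_lt_trans _ (ltry (C * ((1 - p)^-1) ^+ d))).
rewrite /esum; apply: ge_ereal_sup => _ [A [finA AD] <-].
rewrite fsbig_finite //=.
set L := finmap.enum_fset _.
have LA : forall x, x \in L -> qmzv_index d x.
  by move=> x; rewrite in_fset_set // inE => /AD.
rewrite sumEFin lee_fin.
under eq_bigr do rewrite ger0_norm ?normc_ge0 //.
apply: (@le_trans _ _ (\sum_(x <- L) C * \prod_(i < d) p ^+ nth 0%N x i)).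
  rewrite big_seq [X in _ <= X]big_seq; apply: ler_sum => x xL; exact: key (LA x xL).
rewrite -mulr_sumr ler_wpM2l //; apply: finite_sum_le => //.
  exact: finmap.fset_uniq.
by move=> x /LA [].
Qed.

Lemma nth_map0 (l : seq int) i : [seq (0:int) | _ <- l]`_i = 0.
Proof. by elim: l i => [|a l IH] [|i] //=. Qed.

Theorem corollary2p2 (R : realType) (q : R[i]) (s : seq int) :
  cmod q < 1 ->
  [/\ (forall j : nat, (1 <= j <= size s)%N -> (\sum_(i < j) s`_i > j%:Z)) ->
        zetaI_converges s q,
      (forall j : nat, (1 <= j <= size s)%N -> (\sum_(i < j) s`_i > 0)) ->
        zetaII_converges s q,
      zetaIII_converges s q &
      (forall j : nat, (1 <= j <= size s)%N -> (\sum_(i < j) s`_i > 1)) ->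
        zetaIV_converges s q].
Proof.
move=> r1; split.
- move=> H; apply: main_conv => //; first by rewrite /tI size_map.
  move=> j hj; have h := H j hj; rewrite /tI.
  rewrite (eq_bigr (fun i : 'I_j => s`_i - 1)); last first.
    move=> i _.
    rewrite (nth_map (0:int)) //; case/andP: hj => _ hj.
    exact: leq_trans (ltn_ord i) hj.
  move: h; rewrite sumrB sumr_const card_ord.
  rewrite natz.
  move: (\sum_(i < j) s`_i) => S; lia.
- move=> H; apply: main_conv => // j /H; rewrite /tII; lia.
- apply: main_conv => //.
    by case: s => //= x s; rewrite size_map.
  case: s => [|x s] j /=; first by case: j => [|[]].
  case: j => [//|j] _; rewrite big_ord_recl /=.
  rewrite big1 ?addr0 // => i _; exact: nth_map0.
- move=> H; apply: main_conv => //; first by case: s H.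
  case: s H => [|x s] H j /=; first by case: j => [|[]].
  case: j => [//|j] hj; have := H j.+1 hj; rewrite !big_ord_recl /=; lia.
Qed.
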